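(* Let $(M,\rho)$ be a metric space, $f:[a,b]\to M$ arbitrary, and $E=\{x\in[a,b]: md(f,x)\text{ exists and } md(f,x)=0\}$. Then $\mathcal H^1(f(E))=0$.
   Context: $md(f,x)=\lim_{t\to0,\ x+t\in[a,b]}\rho(f(x+t),f(x))/|t|$ when it exists. $\mathcal H^1$ is one-dimensional Hausdorff measure on $M$. *)

(* Defs.v *)
From HB Require Import structures.
From mathcomp Require Import all_boot all_order all_algebra.
From mathcomp Require Import all_classical all_reals all_analysis.
Set Implicit Arguments. Unset Strict Implicit. Unset Printing Implicit Defensive.
Import Order.TTheory GRing.Theory Num.Theory.
Local Open Scope classical_set_scope.
Local Open Scope ring_scope.

Definition is_metric (R : realType) (M : Type) (rho : M -> M -> R) : Prop :=
  (forall x y, 0 <= rho x y) /\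
  (forall x y, rho x y = 0 <-> x = y) /\
  (forall x y, rho x y = rho y x) /\
  (forall x y z, rho x z <= rho x y + rho y z).

(* "md(f,x) exists and equals 0": the limit of rho(f(x+t),f(x))/|t| as t -> 0,
   t <> 0, x+t in [a,b], exists and equals 0 (epsilon-delta form). *)
Definition md_zero (R : realType) (M : Type) (rho : M -> M -> R)
  (a b : R) (f : R -> M) (x : R) : Prop :=
  forall e : R, 0 < e -> exists2 d : R, 0 < d &
    forall t : R, t != 0 -> `|t| < d -> a <= x + t <= b ->
      rho (f (x + t)) (f x) / `|t| < e.

(* diameter, with diam(empty) = 0 *)
Definition diam (R : realType) (M : Type) (rho : M -> M -> R) (C : set M) : \bar R :=
  ereal_sup ([set 0%E] `|` [set (rho p.1 p.2)%:E | p in C `*` C]).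

Definition hausdorff1_delta (R : realType) (M : Type) (rho : M -> M -> R)
  (delta : R) (A : set M) : \bar R :=
  ereal_inf [set (\sum_(i <oo) diam rho (C i))%E | C in
     [set C : nat -> set M | A `<=` \bigcup_i C i /\
                             forall i, (diam rho (C i) <= delta%:E)%E]].

(* one-dimensional Hausdorff measure: lim_{delta -> 0+} = sup over delta > 0 *)
Definition hausdorff1 (R : realType) (M : Type) (rho : M -> M -> R)
  (A : set M) : \bar R :=
  ereal_sup [set hausdorff1_delta rho delta A | delta in [set d : R | 0 < d]].

(* Main.v *)
Require Import Defs.
From HB Require Import structures.
From mathcomp Require Import all_boot all_order all_algebra.
From mathcomp Require Import all_classical all_reals all_analysis.
From mathcomp Require Import ring lra measurable_realfun.
Import Order.TTheory GRing.Theory Num.Theory.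
Import numFieldNormedType.Exports.
Local Open Scope classical_set_scope.
Local Open Scope ring_scope.

Lemma diam_ge0 (R : realType) (M : Type) (rho : M -> M -> R) C :
  (0 <= diam rho C)%E.
Proof. by apply: ereal_sup_ubound; left. Qed.

Lemma diam_le (R : realType) (M : Type) (rho : M -> M -> R) C (k : R) :
  0 <= k -> (forall p q, C p -> C q -> rho p q <= k) -> (diam rho C <= k%:E)%E.
Proof.
move=> k0 hk; apply: ge_ereal_sup => _ [->|[[p q] [/= Cp Cq] <-]].
  by rewrite lee_fin.
by rewrite lee_fin; apply: hk.
Qed.

Lemma ballR (R : realType) (x r y : R) : ball x r y <-> `|x - y| < r.
Proof. by rewrite -ball_normE. Qed.

Lemma cballR (R : realType) (x r y : R) : 0 < r -> closed_ball x r y <-> `|x - y| <= r.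
Proof. by move=> r0; rewrite closed_ballE. Qed.


Lemma key (R : realType) (M : Type) (rho : M -> M -> R)
  (hrho : is_metric rho) (a b : R) (f : R -> M) (delta c : R) :
  0 < delta -> 0 < c ->
  (hausdorff1_delta rho delta (f @` [set x | (a <= x <= b)%R /\ md_zero rho a b f x])
     <= c%:E)%E.
Proof.
move=> d0 c0.
have [rho0 [rhoeq [rhosym rhotri]]] := hrho.
set E := [set x | a <= x <= b /\ md_zero rho a b f x].
pose L := `|b - a| + 2.
have L0 : 0 < L by rewrite /L ltr_wpDl.
pose eps := c / (10 * L).
have eps0 : 0 < eps by rewrite /eps divr_gt0 // mulr_gt0.
have hr : forall x, exists r : R, [/\ 0 < r, r <= 1, 10 * eps * r <= delta &
    (E x -> forall y, E y -> `|x - y| <= 5 * r -> rho (f y) (f x) <= eps * (5 * r))].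
  move=> x.
  have q0 : 0 < delta / (10 * eps) by rewrite divr_gt0 // mulr_gt0.
  have hq : forall r, 0 < r -> r <= delta / (10 * eps) -> 10 * eps * r <= delta.
    by move=> r _ rq; rewrite mulrC -ler_pdivlMr //; exact: mulr_gt0.
  case: (pselect (E x)) => [Ex|nEx]; last first.
    exists (Num.min 1 (delta / (10 * eps))); split => //.
    - by rewrite lt_min ltr01.
    - by rewrite ge_min lexx.
    - by apply: hq; rewrite ?lt_min ?ltr01 ?ge_min ?lexx ?orbT.
  have [d dpos hd] := Ex.2 eps eps0.
  pose r := Num.min (d / 10) (Num.min 1 (delta / (10 * eps))).
  have r0 : 0 < r by rewrite !lt_min ltr01 q0 divr_gt0.
  exists r; split => //.
  - by rewrite /r !ge_min lexx orbT.
  - by apply: hq => //; rewrite /r !ge_min lexx !orbT.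
  move=> _ y Ey xy.
  have [->|yx] := eqVneq y x.
    rewrite (proj2 (rhoeq _ _) erefl); apply/mulr_ge0; first exact: ltW.
    by apply/mulr_ge0 => //; exact: ltW.
  have t0 : y - x != 0 by rewrite subr_eq0.
  have td : `|y - x| < d.
    rewrite distrC (le_lt_trans xy) // (@le_lt_trans _ _ (5 * (d / 10))) //.
      by rewrite ler_pM2l // ge_min lexx.
    lra.
  have := hd (y - x) t0 td; rewrite addrC subrK => /(_ Ey.1).
  rewrite ltr_pdivrMr ?normr_gt0 // => /ltW /le_trans; apply.
  by rewrite ler_pM2l // distrC.
have [r hr'] := choice hr.
have r0 x : 0 < r x by case: (hr' x).
pose B := fun x : R => ball x (r x).
have ballB : forall x, is_ball (B x) by move=> x; exact: is_ball_ball.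
have B0 : forall x, 0 < (radius (B x))%:num.
  by move=> x; rewrite radius_ball_num ?ltW.
have VB : forall x, E x -> (radius (B x))%:num <= 1.
  move=> x _; rewrite radius_ball_num; [by case: (hr' x)|exact: ltW].
have [D [cD DE tD cov]] := vitali_lemma_infinite ballB B0 VB.
have /countable_injP [g ginj] := cD.
pose S n := [set x | D x /\ g x = n].
pose Bn n := \bigcup_(x in S n) B x.
pose Cn n := f @` (E `&` \bigcup_(x in S n) closure (5%:R *` B x)).
have clE x : closure (5%:R *` B x) = [set y | `|x - y| <= 5 * r x].
  rewrite /B scale_ballE // closure_ballE closed_ballE ?mulr_gt0 //.
have diamC n x : S n x -> forall p q, Cn n p -> Cn n q -> rho p q <= 10 * eps * r x.
  move=> [Dx gx] _ _ [y1 [Ey1 [x1 [Dx1 gx1] h1]] <-] [y2 [Ey2 [x2 [Dx2 gx2] h2]] <-].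
  have ex1 : x1 = x by apply: ginj; rewrite ?mem_set //; congruence.
  have ex2 : x2 = x by apply: ginj; rewrite ?mem_set //; congruence.
  subst x1 x2; move: h1 h2; rewrite !clE /= => h1 h2.
  have [_ _ _ hx] := hr' x.
  have Ex := DE x Dx.
  apply: (le_trans (rhotri _ (f x) _)).
  have := hx Ex y1 Ey1 h1; have := hx Ex y2 Ey2 h2; rewrite (rhosym (f x)).
  move=> u v; apply: (le_trans (lerD v u)); lra.
apply: (@le_trans _ _ (\sum_(n <oo) diam rho (Cn n))%E).
  apply: ereal_inf_lbound; exists Cn => //; split.
  - move=> _ [y Ey <-].
    have [j [Dj _ _ sub]] := cov y Ey.
    exists (g j) => //; exists y => //; split => //; exists j => //.
    by apply: sub; apply: subset_closure; exact: ballxx.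
  - move=> n; case: (pselect (S n !=set0)) => [[x Sx]|S0].
      have h0 : 0 <= 10 * eps * r x.
        by apply: mulr_ge0; [apply: mulr_ge0 => //; exact: ltW|exact: ltW].
      have := @diam_le _ _ _ _ _ h0 (diamC n x Sx); move/le_trans; apply.
      by rewrite lee_fin; case: (hr' x).
    apply: diam_le; first exact: ltW.
    by move=> p q [y [_ [x Sx _]] _]; exfalso; apply: S0; exists x.
have mBn n : measurable (Bn n).
  apply: open_measurable; apply: bigcup_open => x _; exact: ball_open.
apply: (@le_trans _ _ (\sum_(n <oo) ((5 * eps)%:E * lebesgue_measure (Bn n)))%E).
  apply: lee_nneseries => [n _ _|n _]; first exact: diam_ge0.
  case: (pselect (S n !=set0)) => [[x Sx]|S0].
    have h0 : 0 <= 10 * eps * r x.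
      by apply: mulr_ge0; [apply: mulr_ge0 => //; exact: ltW|exact: ltW].
    have := @diam_le _ _ _ _ _ h0 (diamC n x Sx); move/le_trans; apply.
    have : (lebesgue_measure (B x) <= lebesgue_measure (Bn n))%E.
      apply: le_measure; [rewrite inE; exact: measurable_ball|rewrite inE; exact: mBn|].
      by move=> z Bz; exists x.
    rewrite /B lebesgue_measure_ball; last exact: ltW.
    move=> h; apply: le_trans (lee_wpmul2l _ h); last by rewrite lee_fin; apply: mulr_ge0 => //; exact: ltW.
    by rewrite -EFinM lee_fin mulr2n; lra.
  have -> : Bn n = set0.
    by apply/seteqP; split => // z [x Sx _]; apply: S0; exists x.
  rewrite measure0 mule0; apply: diam_le => //.
  by move=> p q [y [_ [x Sx _]] _]; exfalso; apply: S0; exists x.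
rewrite nneseriesZl; last by move=> n _; exact: measure_ge0.
have tBn : trivIset setT Bn.
  move=> i j _ _ [z [[x [Dx gx] zx] [y [Dy gy] zy]]].
  have xy : x = y.
    apply: tD => //; exists z; split; apply: subset_closure => //.
  by rewrite -gx -gy xy.
have eqs : (\sum_(n <oo) lebesgue_measure (Bn n) = lebesgue_measure (\bigcup_n Bn n))%E.
  rewrite measure_bigcup //; last by move=> i _; exact: mBn.
  by apply: (@eq_eseriesl _ (fun _ => true) (fun i => i \in setT)) => i; rewrite in_setT.
rewrite eqs.
have sub : \bigcup_n Bn n `<=` ball a L.
  move=> z [n _ [x [Dx _] Bz]].
  have [ax xb] := andP (DE x Dx).1.
  have [_ r1 _ _] := hr' x.
  move: Bz; rewrite /B !ballR => xz.
  have := ler_distD x a z.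
  have : `|a - x| <= `|b - a|.
    rewrite distrC ger0_norm ?subr_ge0 //; apply: le_trans (ler_norm _); lra.
  rewrite /L; lra.
have h : (lebesgue_measure (\bigcup_n Bn n) <= lebesgue_measure (ball a L))%E.
  apply: le_measure; [|by rewrite inE; exact: measurable_ball|exact: sub].
  by rewrite inE; apply: bigcup_measurable => n _; exact: mBn.
rewrite lebesgue_measure_ball in h; last exact: ltW.
apply: le_trans (lee_wpmul2l _ h) _.
  by rewrite lee_fin; apply: mulr_ge0 => //; exact: ltW.
rewrite -EFinM lee_fin /eps mulr2n.
have -> : 5 * (c / (10 * L)) * (L + L) = c by field; lra.
by [].
Qed.

Theorem theorem3p13 (R : realType) (M : Type) (rho : M -> M -> R)
  (hrho : is_metric rho) (a b : R) (f : R -> M) :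
  hausdorff1 rho (f @` [set x | a <= x <= b /\ md_zero rho a b f x]) = 0%E.
Proof.
rewrite /hausdorff1; apply/eqP; rewrite eq_le; apply/andP; split.
  apply: ge_ereal_sup => _ [delta d0 <-].
  apply/lee_addgt0Pr => e e0; rewrite add0e; exact: key.
apply: le_ereal_sup_tmp.
exists (hausdorff1_delta rho 1 (f @` [set x | a <= x <= b /\ md_zero rho a b f x])).
  by exists 1 => //; exact: ltr01.
apply: le_ereal_inf_tmp => _ [C _ <-].
by apply: nneseries_ge0 => n _ _; exact: diam_ge0.
Qed.
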